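(* If $(G,\sigma)$ is a signed graph and $S$ is an $s$-redundant set of $(G,\sigma)$, then $\chi_s(G,\sigma)\le |S|+\chi_s((G,\sigma)-S)$, where $(G,\sigma)-S$ is the signed graph induced on $V(G)\setminus S$.
   Context: A signed graph $(G,\sigma)$ is a simple loopless undirected graph with a signature $\sigma:E(G)\to\{+1,-1\}$. Switching a vertex negates the signs of its incident edges; two signatures are equivalent if one is obtained from the other by switching a set of vertices. A homomorphism of $(G,\sigma)$ to $(H,\pi)$ is a graph homomorphism $\varphi:G\to H$ for which there is a signature $\sigma'$ equivalent to $\sigma$ with $\pi(\varphi(u)\varphi(v))=\sigma'(uv)$ for every edge $uv$; $\chi_s(G,\sigma)$ is the smallest order of a signed graph to which $(G,\sigma)$ admits a homomorphism. A path is unbalanced if the product of its edge signs is $-1$; $UP_3$ denotes an unbalanced path on $3$ vertices. A set $S\subseteq V(G)$ is $s$-redundant if for all $x,y\in V(G)\setminus S$ with $xy\notin E(G)$, every $z\in S$ and every signature $\sigma'$ equivalent to $\sigma$: if $xzy$ is a $UP_3$ in $(G,\sigma')$, then there exists $w\in V(G)\setminus S$ such that $xwy$ is a $UP_3$ in $(G,\sigma')$. *)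

(* Defs.v *)
From mathcomp Require Import all_boot.
From mathcomp Require Import boolp.

Set Implicit Arguments.
Unset Strict Implicit.
Unset Printing Implicit Defensive.

(* A signed graph on the finite vertex type T is given by an adjacency
   relation [e] (simple, loopless, undirected: symmetric and irreflexive)
   and a signature [sg] : T -> T -> bool, where [sg u v = true] means the
   edge uv has sign -1 and [false] means sign +1.  [sg] is symmetric; its
   values on non-edges are irrelevant. *)
Definition signed_graph (T : finType) (e : rel T) (sg : T -> T -> bool) :=
  [/\ symmetric e, irreflexive e & forall u v, sg u v = sg v u].

(* Switching the vertices of X: negates the signs of edges with exactly one
   end in X (an edge with both ends in X is negated twice). *)
Definition switch (T : finType) (sg : T -> T -> bool) (X : {set T}) :=
  fun u v => sg u v (+) (u \in X) (+) (v \in X).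

Definition signed_hom (T U : finType) (e : rel T) (sg : T -> T -> bool)
  (f : rel U) (pi : U -> U -> bool) (phi : T -> U) :=
  (forall u v, e u v -> f (phi u) (phi v)) /\
  exists X : {set T}, forall u v, e u v -> pi (phi u) (phi v) = switch sg X u v.

(* (G,sg) admits a homomorphism to some signed graph of order k
   (any finite signed graph of order k is isomorphic to one on 'I_k). *)
Definition hom_to_order (T : finType) (e : rel T) (sg : T -> T -> bool)
  (k : nat) : Prop :=
  exists (f : rel 'I_k) (pi : 'I_k -> 'I_k -> bool) (phi : T -> 'I_k),
    signed_graph f pi /\ signed_hom e sg f pi phi.

Lemma hom_to_order_exists (T : finType) (e : rel T) (sg : T -> T -> bool) :
  signed_graph e sg -> exists k, `[< hom_to_order e sg k >].
Proof.
case=> esym eirr sgsym; exists #|T|; apply/asboolP.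
exists (fun i j => e (enum_val i) (enum_val j)).
exists (fun i j => sg (enum_val i) (enum_val j)).
exists enum_rank; split.
  split.
  - by move=> i j /=; rewrite esym.
  - by move=> i /=; rewrite eirr.
  - by move=> i j; rewrite sgsym.
split; first by move=> u v /=; rewrite !enum_rankK.
exists set0 => u v _; by rewrite /switch !enum_rankK !inE !addbF.
Qed.

(* The signed chromatic number chi_s(G,sg) (for a signed graph): smallest
   order of a signed graph to which (G,sg) admits a homomorphism.
   For non-signed-graph input it is (irrelevantly) 0. *)
Definition chi_s (T : finType) (e : rel T) (sg : T -> T -> bool) : nat :=
  match pselect (signed_graph e sg) with
  | left H => ex_minn (hom_to_order_exists H)
  | right _ => 0
  end.

Definition UP3 (T : finType) (e : rel T) (sg' : T -> T -> bool) (x z y : T) :=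
  [/\ x != y, e x z, e z y & sg' x z (+) sg' z y].

Definition s_redundant (T : finType) (e : rel T) (sg : T -> T -> bool)
  (S : {set T}) :=
  forall x y, x \notin S -> y \notin S -> ~~ e x y ->
  forall z, z \in S -> forall X : {set T},
    UP3 e (switch sg X) x z y ->
    exists2 w, w \notin S & UP3 e (switch sg X) x w y.

Definition del_type (T : finType) (S : {set T}) := {x : T | x \notin S}.
Definition del_rel (T : finType) (S : {set T}) (e : rel T) : rel (del_type S) :=
  fun x y => e (val x) (val y).
Definition del_sig (T : finType) (S : {set T}) (sg : T -> T -> bool) :
  del_type S -> del_type S -> bool :=
  fun x y => sg (val x) (val y).
Arguments del_rel {T} S e _ _.
Arguments del_sig {T} S sg _ _.

(* Main.v *)
Require Import Defs.
From mathcomp Require Import all_boot.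
From mathcomp Require Import boolp.

Set Implicit Arguments.
Unset Strict Implicit.
Unset Printing Implicit Defensive.

Lemma chi_s_min (T : finType) (e : rel T) (sg : T -> T -> bool) n :
  signed_graph e sg -> hom_to_order e sg n -> chi_s e sg <= n.
Proof.
move=> H Hn; rewrite /chi_s; case: pselect => // H'.
case: ex_minnP => m _ Hm; apply: Hm; exact/asboolP.
Qed.

Lemma chi_s_spec (T : finType) (e : rel T) (sg : T -> T -> bool) :
  signed_graph e sg -> hom_to_order e sg (chi_s e sg).
Proof.
move=> H; rewrite /chi_s; case: pselect => // H'.
case: ex_minnP => m /asboolP Hm _; exact: Hm.
Qed.

Lemma hom_card (T U : finType) (e : rel T) (sg : T -> T -> bool)
  (f : rel U) (pi : U -> U -> bool) (phi : T -> U) :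
  signed_graph f pi -> signed_hom e sg f pi phi -> hom_to_order e sg #|U|.
Proof.
case=> fs fi ps [hf [X hX]].
exists (fun i j => f (enum_val i) (enum_val j)).
exists (fun i j => pi (enum_val i) (enum_val j)).
exists (fun v => enum_rank (phi v)); split.
  split.
  - by move=> i j /=; rewrite fs.
  - by move=> i /=; rewrite fi.
  - by move=> i j; rewrite ps.
split; first by move=> u v /= h; rewrite !enum_rankK; apply: hf.
by exists X => u v h; rewrite !enum_rankK; apply: hX.
Qed.

Lemma switch_sym (T : finType) (sg : T -> T -> bool) X u v :
  (forall u v, sg u v = sg v u) -> switch sg X u v = switch sg X v u.
Proof. move=> h; rewrite /switch h; by case: (sg v u); case: (u \in X); case: (v \in X). Qed.

Section Constr.
Variables (T : finType) (e : rel T) (sg : T -> T -> bool) (S : {set T}).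
Hypothesis HG : signed_graph e sg.
Hypothesis HR : s_redundant e sg S.
Variable k : nat.
Variables (f' : rel 'I_k) (pi' : 'I_k -> 'I_k -> bool)
  (phi' : del_type S -> 'I_k) (X' : {set del_type S}).
Hypothesis Hf' : signed_graph f' pi'.
Hypothesis Hhom : forall u v, del_rel S e u v -> f' (phi' u) (phi' v).
Hypothesis Hsgn : forall u v, del_rel S e u v ->
  pi' (phi' u) (phi' v) = switch (del_sig S sg) X' u v.

Definition U := ({x : T | x \in S} + 'I_k)%type.
Definition X : {set T} := [set v | [exists d in X', val d == v]].

Lemma inX (d : del_type S) : (val d \in X) = (d \in X').
Proof.
rewrite inE; apply/existsP/idP => [[d' /andP [h /eqP /val_inj <-]] //|h].
by exists d; rewrite h eqxx.
Qed.

Definition cand (a : {x : T | x \in S}) (i : 'I_k) (d : del_type S) :=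
  e (val a) (val d) && (phi' d == i).

Definition fU (p q : U) : bool :=
  match p, q with
  | inl a, inl b => e (val a) (val b)
  | inr i, inr j => f' i j
  | inl a, inr i => [exists d, cand a i d]
  | inr i, inl a => [exists d, cand a i d]
  end.

Definition mixsg a i :=
  if [pick d | cand a i d] is Some d then switch sg X (val a) (val d) else false.

Definition piU (p q : U) : bool :=
  match p, q with
  | inl a, inl b => switch sg X (val a) (val b)
  | inr i, inr j => pi' i j
  | inl a, inr i => mixsg a i
  | inr i, inl a => mixsg a i
  end.

Definition phiU_aux (v : T) (b : bool) : (v \in S) = b -> U :=
  if b as b0 return ((v \in S) = b0 -> U) then fun h => inl (exist _ v h)
  else fun h => inr (phi' (exist _ v (negbT h))).

Definition phiU (v : T) : U := @phiU_aux v (v \in S) erefl.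

Lemma phiU_S v (h : v \in S) : phiU v = inl (exist _ v h).
Proof.
have gen : forall b (E : (v \in S) = b) (hb : b = true),
    phiU_aux E = @inl {x : T | x \in S} 'I_k (@exist T (fun x => x \in S) v (etrans E hb)).
  move=> b E hb; move: hb E; case: b => // hb E; have -> : hb = erefl by exact: eq_irrelevance.
  done.
rewrite /phiU (gen _ _ h); congr inl; congr exist; exact: eq_irrelevance.
Qed.

Lemma phiU_N (d : del_type S) : phiU (val d) = inr (phi' d).
Proof.
case: d => v hv /=.
have gen : forall b (E : (v \in S) = b) (hb : b = false),
    phiU_aux E = @inr {x : T | x \in S} 'I_k (phi' (@exist T (fun x => x \notin S) v (negbT (etrans E hb)))).
  move=> b E hb; move: hb E; case: b => // hb E; have -> : hb = erefl by exact: eq_irrelevance.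
  done.
rewrite /phiU (gen _ _ (negbTE hv)); congr (inr (phi' _)); exact: val_inj.
Qed.

Lemma U_graph : signed_graph fU piU.
Proof.
case: HG => es ei ss; case: Hf' => fs fi ps.
split.
- by case=> [a|i] [b|j] //=; rewrite ?es ?fs.
- by case=> [a|i] /=; rewrite ?ei ?fi.
- case=> [a|i] [b|j] //=; rewrite ?ps //; exact: switch_sym.
Qed.

Lemma mix_ok a (d : del_type S) : e (val a) (val d) ->
  mixsg a (phi' d) = switch sg X (val a) (val d).
Proof.
case: HG => es ei ss; case: Hf' => fs fi ps.
move=> ead; rewrite /mixsg; case: pickP => [d0 /andP [ead0 /eqP hd0]|]; last first.
  by move=> /(_ d); rewrite /cand ead eqxx.
have [->//|nd] := eqVneq d0 d.
have ne : ~~ e (val d0) (val d).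
  apply/negP => h; have := Hhom (u := d0) (v := d) h; by rewrite hd0 fi.
apply/eqP; apply/negPn/negP => hne.
have up : UP3 e (switch sg X) (val d0) (val a) (val d).
  split.
  - by rewrite (inj_eq val_inj).
  - by rewrite es.
  - done.
  - by rewrite (switch_sym _ _ _ ss); move: hne; case: (switch sg X _ _); case: (switch sg X _ _).
have [w wS [_ e1 e2 xo]] := HR (valP d0) (valP d) ne (valP a) up.
pose dw : del_type S := exist _ w wS.
have s1 := Hsgn (u := d0) (v := dw) e1.
have e2' : del_rel S e d dw by rewrite /del_rel es.
have s2 := Hsgn e2'.
have E : switch sg X (val d0) w = switch sg X (val d) w.
  by move: s1 s2; rewrite hd0 /switch /del_sig -!inX /= => <- <-.
by move: xo; rewrite E (switch_sym _ _ _ ss) addbb.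
Qed.

Lemma U_hom : signed_hom e sg fU piU phiU.
Proof.
case: HG => es ei ss.
split.
  move=> u v euv; case: (boolP (u \in S)) => hu; case: (boolP (v \in S)) => hv.
  - by rewrite (phiU_S hu) (phiU_S hv).
  - rewrite (phiU_S hu) -[v]/(val (exist (fun x => x \notin S) v hv)) phiU_N /=.
    by apply/existsP; exists (exist _ v hv); rewrite /cand eqxx andbT.
  - rewrite (phiU_S hv) -[u]/(val (exist (fun x => x \notin S) u hu)) phiU_N /=.
    by apply/existsP; exists (exist _ u hu); rewrite /cand eqxx andbT /= es.
  - rewrite -[u]/(val (exist (fun x => x \notin S) u hu)) -[v]/(val (exist (fun x => x \notin S) v hv)) !phiU_N.
    by apply: Hhom.
exists X => u v euv; case: (boolP (u \in S)) => hu; case: (boolP (v \in S)) => hv.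
- by rewrite (phiU_S hu) (phiU_S hv).
- rewrite (phiU_S hu) -[v]/(val (exist (fun x => x \notin S) v hv)) phiU_N /=.
  by rewrite mix_ok.
- rewrite (phiU_S hv) -[u]/(val (exist (fun x => x \notin S) u hu)) phiU_N /=.
  have evu : e (val (exist (fun x => x \in S) v hv)) (val (exist (fun x => x \notin S) u hu)) by rewrite es.
  by rewrite /= (mix_ok evu) switch_sym.
- rewrite -[u]/(val (exist (fun x => x \notin S) u hu)) -[v]/(val (exist (fun x => x \notin S) v hv)) !phiU_N.
  by rewrite /= Hsgn // /switch /del_sig -(inX (exist _ u hu)) -(inX (exist _ v hv)).
Qed.

Lemma U_card : #|{: U}| = #|S| + k.
Proof. by rewrite card_sum card_sig card_ord; congr (_ + _); apply: eq_card. Qed.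

End Constr.

Theorem theorem5p3 (T : finType) (e : rel T) (sg : T -> T -> bool)
  (S : {set T}) :
  signed_graph e sg -> s_redundant e sg S ->
  chi_s e sg <= #|S| + chi_s (del_rel S e) (del_sig S sg).
Proof.
move=> HG HR.
have HD : signed_graph (del_rel S e) (del_sig S sg).
  case: HG => es ei ss; split.
  - by move=> x y; rewrite /del_rel es.
  - by move=> x; rewrite /del_rel ei.
  - by move=> x y; rewrite /del_sig ss.
have [f' [pi' [phi' [Hf' [Hhom [X' Hsgn]]]]]] := chi_s_spec HD.
apply: chi_s_min => //.
have := hom_card (U_graph HG phi' X' Hf') (U_hom HG HR Hf' Hhom Hsgn).
by rewrite U_card.
Qed.
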